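(* For every approval-based SCV instance there exists a committee that simultaneously satisfies weak-SW-JR and IW-JR, and such a committee is produced by the following procedure: (1) start with $W=\emptyset$; (2) for each $j=1,\ldots,\ell$, repeatedly add to $W$ a candidate of $C_j$ whose support among voters not yet having an approved candidate in $W\cap C_j$ is largest, as long as this support is at least $n/k_j$ and fewer than $k_j$ candidates of $C_j$ have been chosen; (3) then, using the remaining positions, repeatedly add an unelected candidate (from a subset $C_j$ with $|W\cap C_j|<k_j$) whose support among voters having no approved candidate in $W$ is largest, as long as this support is at least $n/k$; (4) fill any remaining positions arbitrarily so that $|W\cap C_j|=k_j$ for all $j$. Here the support of a candidate $c$ among a set of voters $S$ is $|\{i\in S: c\in A_i\}|$.
   Context: An approval-based sub-committee voting (SCV) instance consists of a set of voters $N=\{1,\ldots,n\}$, a finite set of candidates $C$ partitioned into candidate subsets $C_1,\ldots,C_\ell$, positive integer quotas $k_j\le |C_j|$ with $k=\sum_{j=1}^\ell k_j$, and approval ballots $A_i\subseteq C$ for $i\in N$. A committee is a set $W\subseteq C$ with $|W\cap C_j|=k_j$ for every $j$. $W$ satisfies Intra-wise JR (IW-JR) if for every $X\subseteq N$ and every $j$, whenever $|X|\ge n/k_j$ and $|(\bigcap_{i\in X}A_i)\cap C_j|\ge 1$, we have $|W\cap C_j\cap \bigcup_{i\in X}A_i|\ge 1$. $W$ satisfies weak-SW-JR if for every $X\subseteq N$ with $|X|\ge n/k$ and $|(\bigcap_{i\in X}A_i)\cap C_j|\ge 1$ for all $j=1,\ldots,\ell$ we have $|W\cap \bigcup_{i\in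 X}A_i|\ge 1$. *)

(* Defs.v *)
From mathcomp Require Import all_boot.
Set Implicit Arguments. Unset Strict Implicit. Unset Printing Implicit Defensive.

(* An approval-based SCV instance:
   - voters N = 'I_n (n voters),
   - candidates: a finType C, partitioned by part : C -> 'I_l into C_0..C_{l-1},
   - quotas kq : 'I_l -> nat,
   - ballots A : 'I_n -> {set C}.
   Thresholds |X| >= n / k_j are written |X| * k_j >= n (exact rational
   comparison, no rounding). *)

Section SCV.
Variables (C : finType) (l n : nat) (part : C -> 'I_l) (kq : 'I_l -> nat)
          (A : 'I_n -> {set C}).

Definition Cj (j : 'I_l) : {set C} := [set c | part c == j].

Definition ktot : nat := \sum_(j < l) kq j.

Definition is_committee (W : {set C}) : Prop :=
  forall j : 'I_l, #|W :&: Cj j| = kq j.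

Definition IW_JR (W : {set C}) : Prop :=
  forall (X : {set 'I_n}) (j : 'I_l),
    n <= #|X| * kq j ->
    1 <= #|(\bigcap_(i in X) A i) :&: Cj j| ->
    1 <= #|W :&: Cj j :&: \bigcup_(i in X) A i|.

Definition weak_SW_JR (W : {set C}) : Prop :=
  forall X : {set 'I_n},
    n <= #|X| * ktot ->
    (forall j : 'I_l, 1 <= #|(\bigcap_(i in X) A i) :&: Cj j|) ->
    1 <= #|W :&: \bigcup_(i in X) A i|.

Definition supp (S : {set 'I_n}) (c : C) : nat := #|[set i in S | c \in A i]|.

Definition uncov_j (j : 'I_l) (W : {set C}) : {set 'I_n} :=
  [set i | [disjoint A i & W :&: Cj j]].

Definition uncov (W : {set C}) : {set 'I_n} := [set i | [disjoint A i & W]].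

Inductive star (R : {set C} -> {set C} -> Prop) : {set C} -> {set C} -> Prop :=
| star_refl W : star R W W
| star_step W1 W2 W3 : R W1 W2 -> star R W2 W3 -> star R W1 W3.

Definition step2 (j : 'I_l) (W W' : {set C}) : Prop :=
  exists c, [/\ W' = c |: W, (c \in Cj j) && (c \notin W),
     #|W :&: Cj j| < kq j,
     n <= supp (uncov_j j W) c * kq j &
     forall c', c' \in Cj j -> c' \notin W ->
       supp (uncov_j j W) c' <= supp (uncov_j j W) c].

Definition stop2 (j : 'I_l) (W : {set C}) : Prop :=
  kq j <= #|W :&: Cj j| \/
  (forall c', c' \in Cj j -> c' \notin W -> supp (uncov_j j W) c' * kq j < n).

Definition run2 (j : 'I_l) (W W' : {set C}) : Prop :=
  star (step2 j) W W' /\ stop2 j W'.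

Definition eligible (W : {set C}) (c : C) : bool :=
  (c \notin W) && (#|W :&: Cj (part c)| < kq (part c)).

Definition step3 (W W' : {set C}) : Prop :=
  exists c, [/\ W' = c |: W, eligible W c,
     n <= supp (uncov W) c * ktot &
     forall c', eligible W c' -> supp (uncov W) c' <= supp (uncov W) c].

Definition stop3 (W : {set C}) : Prop :=
  forall c', eligible W c' -> supp (uncov W) c' * ktot < n.

Definition run3 (W W' : {set C}) : Prop := star step3 W W' /\ stop3 W'.

(* W is a possible output of the whole procedure (any tie-breaking, any
   arbitrary filling in step (4)). *)
Definition procedure_output (W : {set C}) : Prop :=
  exists (Ws : nat -> {set C}) (W3 : {set C}),
    [/\ Ws 0 = set0,
        (forall j : 'I_l, run2 j (Ws j) (Ws j.+1)),
        run3 (Ws l) W3,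
        W3 \subset W &
        is_committee W].

End SCV.

(* Main.v *)
Require Import Defs.
From mathcomp Require Import all_boot zify.
Set Implicit Arguments. Unset Strict Implicit. Unset Printing Implicit Defensive.

Lemma star_inv (T : Type) (R : T -> T -> Prop) (I : T -> Prop) : True.
Proof. by []. Qed.

Lemma starP {C : finType} (R : {set C} -> {set C} -> Prop) (I : {set C} -> Prop) x y :
  (forall a b, R a b -> I a -> I b) -> star R x y -> I x -> I y.
Proof. move=> H; elim=> // a b c Rab _ IH Ia; exact/IH/(H a b). Qed.

Lemma star_sub {C : finType} (R : {set C} -> {set C} -> Prop) x y :
  (forall a b, R a b -> a \subset b) -> star R x y -> x \subset y.
Proof.
move=> H; elim=> // a b c Rab _ IH; exact: subset_trans (H _ _ Rab) IH.
Qed.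

Lemma card_split {n : nat} (S : {set 'I_n}) (p : pred 'I_n) :
  #|[set i in S | p i]| + #|[set i in S | ~~ p i]| = #|S|.
Proof.
rewrite -(cardsID [set i | p i] S).
by congr (_ + _); apply: eq_card => i; rewrite !inE // andbC.
Qed.

Lemma card_parts {C : finType} {l : nat} (part : C -> 'I_l) (W : {set C}) :
  #|W| = \sum_(j < l) #|W :&: Cj part j|.
Proof.
rewrite -sum1_card (partition_big part predT) //=.
apply: eq_bigr => j _; rewrite -sum1_card; apply: eq_bigl => c.
by rewrite !inE andbC.
Qed.
Lemma dis_add (C : finType) (B X : {set C}) c :
  [disjoint B & c |: X] = (c \notin B) && [disjoint B & X].
Proof.
rewrite disjoint_sym (disjoint_sym B X) -disjointU1.
by apply: eq_disjoint => x; rewrite !inE.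
Qed.

Lemma cj_add {C : finType} {l : nat} (part : C -> 'I_l) j W c :
  c \in Cj part j -> (c |: W) :&: Cj part j = c |: (W :&: Cj part j).
Proof.
move=> Hc; apply/setP => x; rewrite !inE.
by case: (eqVneq x c) => [->|] //=; move: Hc; rewrite inE => ->.
Qed.

Lemma cj_other {C : finType} {l : nat} (part : C -> 'I_l) j W c :
  c \notin Cj part j -> (c |: W) :&: Cj part j = W :&: Cj part j.
Proof.
move=> Hc; apply/setP => x; rewrite !inE.
case: (eqVneq x c) => [->|] //=.
by move: Hc; rewrite inE => /negbTE ->; rewrite !andbF.
Qed.

Lemma uncov_j_add {C : finType} {l n : nat} (part : C -> 'I_l) (A : 'I_n -> {set C}) j W c :
  c \in Cj part j ->
  uncov_j part A j (c |: W) = [set i in uncov_j part A j W | c \notin A i].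
Proof.
move=> Hc; apply/setP => i; rewrite !inE cj_add // dis_add.
by rewrite andbC.
Qed.

Lemma uncov_add {C : finType} {n : nat} (A : 'I_n -> {set C}) W c :
  uncov A (c |: W) = [set i in uncov A W | c \notin A i].
Proof.
by apply/setP => i; rewrite !inE dis_add andbC.
Qed.

Lemma supp_split {C : finType} {n : nat} (A : 'I_n -> {set C}) S c :
  supp A S c + #|[set i in S | c \notin A i]| = #|S|.
Proof. exact: (card_split S (fun i => c \in A i)). Qed.

Definition PJ {C : finType} {l n : nat} (part : C -> 'I_l) (kq : 'I_l -> nat)
  (A : 'I_n -> {set C}) j W :=
  #|uncov_j part A j W| * kq j + n * #|W :&: Cj part j| <= n * kq j.

Lemma step2_P {C : finType} {l n : nat} (part : C -> 'I_l) (kq : 'I_l -> nat)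
  (A : 'I_n -> {set C}) j j' W W' :
  step2 part kq A j' W W' -> PJ part kq A j W -> PJ part kq A j W'.
Proof.
case=> c [-> /andP[Hc HcW] _ Hs _]; rewrite /PJ.
case: (boolP (c \in Cj part j)) => Hcj; last first.
  by rewrite /uncov_j !cj_other.
have Hj' : j' = j by move: Hc Hcj; rewrite !inE => /eqP -> /eqP.
subst j'.
have HcW' : c \notin W :&: Cj part j by rewrite inE (negbTE HcW).
rewrite uncov_j_add // cj_add // cardsU1 HcW' /=.
have := supp_split A (uncov_j part A j W) c.
set u := #|uncov_j part A j W|.
set s := supp A _ c; set r := #|_|; set d := #|_|.
move=> Hsr HP.
have : r * kq j + n <= u * kq j by rewrite -Hsr mulnDl; lia.
lia.
Qed.

Lemma step3_Q {C : finType} {l n : nat} (part : C -> 'I_l) (kq : 'I_l -> nat)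
  (A : 'I_n -> {set C}) W W' :
  step3 part kq A W W' ->
  #|uncov A W'| * ktot kq + n * #|W'| <= #|uncov A W| * ktot kq + n * #|W|.
Proof.
case=> c [-> /andP[HcW _] Hs _].
rewrite uncov_add cardsU1 HcW /=.
have := supp_split A (uncov A W) c.
set u := #|uncov A W|.
set s := supp A _ c; set r := #|_|.
move=> Hsr.
have : r * ktot kq + n <= u * ktot kq by rewrite -Hsr mulnDl; lia.
lia.
Qed.

Definition Inv {C : finType} {l : nat} (part : C -> 'I_l) (kq : 'I_l -> nat) W :=
  forall j, #|W :&: Cj part j| <= kq j.

Lemma step2_Inv {C : finType} {l n : nat} (part : C -> 'I_l) (kq : 'I_l -> nat)
  (A : 'I_n -> {set C}) j' W W' :
  step2 part kq A j' W W' -> Inv part kq W -> Inv part kq W'.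
Proof.
case=> c [-> /andP[Hc HcW] Hlt _ _] HI j.
case: (boolP (c \in Cj part j)) => Hcj; last by rewrite cj_other.
have Hj' : j' = j by move: Hc Hcj; rewrite !inE => /eqP -> /eqP.
subst j'.
have HcW' : c \notin W :&: Cj part j by rewrite inE (negbTE HcW).
by rewrite cj_add // cardsU1 HcW'.
Qed.

Lemma step3_Inv {C : finType} {l n : nat} (part : C -> 'I_l) (kq : 'I_l -> nat)
  (A : 'I_n -> {set C}) W W' :
  step3 part kq A W W' -> Inv part kq W -> Inv part kq W'.
Proof.
case=> c [-> /andP[HcW Hlt] _ _] HI j.
case: (boolP (c \in Cj part j)) => Hcj; last by rewrite cj_other.
have Hj' : part c = j by move: Hcj; rewrite !inE => /eqP.
subst j.
have HcW' : c \notin W :&: Cj part (part c) by rewrite inE (negbTE HcW).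
by rewrite cj_add // cardsU1 HcW'.
Qed.

Lemma step2_sub {C : finType} {l n : nat} (part : C -> 'I_l) (kq : 'I_l -> nat)
  (A : 'I_n -> {set C}) j W W' : step2 part kq A j W W' -> W \subset W'.
Proof. by case=> c [-> _ _ _ _]; apply: subsetUr. Qed.

Lemma step3_sub {C : finType} {l n : nat} (part : C -> 'I_l) (kq : 'I_l -> nat)
  (A : 'I_n -> {set C}) W W' : step3 part kq A W W' -> W \subset W'.
Proof. by case=> c [-> _ _ _]; apply: subsetUr. Qed.

Lemma compl_dec {C : finType} (W : {set C}) c :
  c \notin W -> #|~: (c |: W)| < #|~: W|.
Proof.
move=> Hc; have := cardsC (c |: W); have := cardsC W.
rewrite cardsU1 Hc /=; lia.
Qed.

Lemma run2_ex {C : finType} {l n : nat} (part : C -> 'I_l) (kq : 'I_l -> nat)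
  (A : 'I_n -> {set C}) j W : exists W', run2 part kq A j W W'.
Proof.
have [m] := ubnP #|~: W|; elim: m W => // m IH W Hm.
case: (leqP (kq j) #|W :&: Cj part j|) => Hk.
  by exists W; split; [constructor | left].
case: (boolP [exists c, [&& c \in Cj part j, c \notin W &
    n <= supp A (uncov_j part A j W) c * kq j]]).
- case/existsP => c0 /and3P[H1 H2 H3].
  pose P := fun c => (c \in Cj part j) && (c \notin W).
  have P0 : P c0 by rewrite /P H1 H2.
  case: (@arg_maxnP _ c0 P (supp A (uncov_j part A j W)) P0)
    => c /andP[Hc1 Hc2] Hmax.
  have st : step2 part kq A j W (c |: W).
    exists c; split => //; first by rewrite Hc1 Hc2.
      apply: leq_trans H3 _; apply: leq_mul => //; exact: Hmax.
    by move=> c' Hc1' Hc2'; apply: Hmax; rewrite /P Hc1' Hc2'.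
  have [W' [Hs Hst]] := IH (c |: W) (leq_trans (compl_dec Hc2) Hm).
  by exists W'; split => //; apply: star_step st Hs.
- move/existsPn => H; exists W; split; first constructor.
  right => c' H1 H2; have := H c'; rewrite H1 H2 /= -ltnNge; done.
Qed.

Lemma run3_ex {C : finType} {l n : nat} (part : C -> 'I_l) (kq : 'I_l -> nat)
  (A : 'I_n -> {set C}) W : exists W', run3 part kq A W W'.
Proof.
have [m] := ubnP #|~: W|; elim: m W => // m IH W Hm.
case: (boolP [exists c, eligible part kq W c &&
    (n <= supp A (uncov A W) c * ktot kq)]).
- case/existsP => c0 /andP[H1 H3].
  case: (@arg_maxnP _ c0 (eligible part kq W) (supp A (uncov A W)) H1)
    => c Hc Hmax.
  have st : step3 part kq A W (c |: W).
    exists c; split => //.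
    apply: leq_trans H3 _; apply: leq_mul => //; exact: Hmax.
  have Hc2 : c \notin W by case/andP: Hc.
  have [W' [Hs Hst]] := IH (c |: W) (leq_trans (compl_dec Hc2) Hm).
  by exists W'; split => //; apply: star_step st Hs.
- move/existsPn => H; exists W; split; first constructor.
  move=> c' H1; have := H c'; rewrite H1 /= -ltnNge; done.
Qed.

Lemma extend_set {T : finType} (X Y : {set T}) m :
  X \subset Y -> #|X| <= m -> m <= #|Y| ->
  exists S : {set T}, [/\ X \subset S, S \subset Y & #|S| = m].
Proof.
move=> HXY H1 H2; have [d Hd] : exists d, m = #|X| + d by exists (m - #|X|); lia.
elim: d X HXY H1 Hd => [|d IH] X HXY H1 Hd.
  by exists X; split => //; rewrite Hd addn0.
case: (set_0Vmem (Y :\: X)) => [H0 | [x Hx]].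
  have : Y \subset X by rewrite -setD_eq0 H0.
  move/subset_leq_card; lia.
move: Hx; rewrite inE => /andP[HxX HxY].
have E1 : x |: X \subset Y.
  by apply/subsetP => y; rewrite !inE => /orP[/eqP ->|] //; move/(subsetP HXY).
have E2 : #|x |: X| <= m by rewrite cardsU1 HxX; lia.
have E3 : m = #|x |: X| + d by rewrite cardsU1 HxX; lia.
have [S [HS1 HS2 HS3]] := IH (x |: X) E1 E2 E3.
by exists S; split => //; apply: subset_trans HS1; apply: subsetUr.
Qed.

Lemma fill_ex {C : finType} {l : nat} (part : C -> 'I_l) (kq : 'I_l -> nat) W3 :
  Inv part kq W3 -> (forall j, kq j <= #|Cj part j|) ->
  exists W : {set C}, W3 \subset W /\ is_committee part kq W.
Proof.
move=> HI HC.
pose S j := odflt set0 [pick S : {set C} | [&& W3 :&: Cj part j \subset S,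
    S \subset Cj part j & #|S| == kq j]].
have HS j : [/\ W3 :&: Cj part j \subset S j, S j \subset Cj part j & #|S j| = kq j].
  rewrite /S; case: pickP => [S0 /and3P[a b /eqP c] | H] //=.
  have [S0 [a b c]] := extend_set (subsetIr W3 (Cj part j)) (HI j) (HC j).
  by have := H S0; rewrite a b c eqxx.
exists (\bigcup_(j < l) S j); split.
  apply/subsetP => x Hx; apply/bigcupP; exists (part x) => //.
  have [a _ _] := HS (part x); apply: (subsetP a); by rewrite !inE Hx eqxx.
move=> j; have [_ b c] := HS j; rewrite -c; apply: eq_card => x.
rewrite inE; apply/andP/idP.
  case=> /bigcupP[j' _ Hx] Hxj.
  have [_ b' _] := HS j'; have := subsetP b' x Hx; rewrite !inE => /eqP Hj'.
  by move: Hxj; rewrite inE Hj' => /eqP <-.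
move=> Hx; split; last exact: (subsetP b).
by apply/bigcupP; exists j.
Qed.

Lemma Ws_ex {C : finType} {l n : nat} (part : C -> 'I_l) (kq : 'I_l -> nat)
  (A : 'I_n -> {set C}) m : m <= l ->
  exists Ws : nat -> {set C}, Ws 0 = set0 /\
    forall j : 'I_l, j < m -> run2 part kq A j (Ws j) (Ws j.+1).
Proof.
elim: m => [|m IH] Hm.
  by exists (fun _ => set0); split => // j.
have [Ws [H0 HW]] := IH (ltnW Hm).
have [W' HW'] := run2_ex part kq A (Ordinal Hm) (Ws m).
exists (fun i => if i == m.+1 then W' else Ws i); split => // j Hj.
rewrite eqSS (ltn_eqF Hj).
case: (ltngtP j m) => Hjm.
- by apply: HW.
- lia.
- have -> : j = Ordinal Hm by apply: val_inj.
  exact: HW'.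
Qed.

Lemma Ws_sub {C : finType} {l n : nat} (part : C -> 'I_l) (kq : 'I_l -> nat)
  (A : 'I_n -> {set C}) (Ws : nat -> {set C}) :
  (forall j : 'I_l, run2 part kq A j (Ws j) (Ws j.+1)) ->
  forall i, i <= l -> Ws i \subset Ws l.
Proof.
move=> H2 i Hi; have [d Hd] : exists d, i + d = l by exists (l - i); lia.
elim: d i Hi Hd => [|d IH] i Hi Hd.
  by rewrite -Hd addn0.
have Hil : i < l by lia.
have [Hs _] := H2 (Ordinal Hil).
apply: subset_trans (IH i.+1 Hil _); last by rewrite addSn -addnS.
exact: (star_sub (@step2_sub _ _ _ part kq A _) Hs).
Qed.

Lemma P_Ws {C : finType} {l n : nat} (part : C -> 'I_l) (kq : 'I_l -> nat)
  (A : 'I_n -> {set C}) (Ws : nat -> {set C}) :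
  Ws 0 = set0 ->
  (forall j : 'I_l, run2 part kq A j (Ws j) (Ws j.+1)) ->
  forall j i, i <= l -> PJ part kq A j (Ws i).
Proof.
move=> H0 H2 j; elim=> [|i IH] Hi.
  rewrite H0 /PJ set0I cards0 muln0 addn0 leq_mul2r.
  by rewrite (leq_trans (max_card _)) ?card_ord ?orbT.
have [Hs _] := H2 (Ordinal Hi).
exact: (starP (fun a b => @step2_P _ _ _ part kq A j _ a b) Hs (IH (ltnW Hi))).
Qed.

Lemma Inv_Ws {C : finType} {l n : nat} (part : C -> 'I_l) (kq : 'I_l -> nat)
  (A : 'I_n -> {set C}) (Ws : nat -> {set C}) :
  Ws 0 = set0 ->
  (forall j : 'I_l, run2 part kq A j (Ws j) (Ws j.+1)) ->
  forall i, i <= l -> Inv part kq (Ws i).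
Proof.
move=> H0 H2; elim=> [|i IH] Hi.
  by rewrite H0 => j; rewrite set0I cards0.
have [Hs _] := H2 (Ordinal Hi).
exact: (starP (fun a b => @step2_Inv _ _ _ part kq A _ a b) Hs (IH (ltnW Hi))).
Qed.

Lemma correct {C : finType} {l n : nat} (part : C -> 'I_l) (kq : 'I_l -> nat)
  (A : 'I_n -> {set C}) (W : {set C}) :
  0 < n -> (forall j : 'I_l, 0 < kq j) ->
  procedure_output part kq A W ->
  [/\ is_committee part kq W, weak_SW_JR part kq A W & IW_JR part kq A W].
Proof.
move=> Hn Hk [Ws [W3 [H0 H2 [Hr3 Hst3] HW3 HC]]].
have Hl3 : Ws l \subset W3 := star_sub (@step3_sub _ _ _ part kq A) Hr3.
have HsubW : forall i, i <= l -> Ws i \subset W.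
  move=> i Hi; apply: subset_trans (Ws_sub H2 Hi) _.
  exact: subset_trans Hl3 HW3.
have HP := P_Ws H0 H2.
split => //.
-
  move=> X HX Hcom.
  case: (posnP #|W :&: \bigcup_(i in X) A i|) => [Z0|]; last by [].
  have Z := cards0_eq Z0.
  have Hdis : forall i, i \in X -> [disjoint A i & W].
    move=> i Hi; rewrite -setI_eq0; apply/eqP/setP => x; rewrite !inE.
    apply/negbTE/negP => /andP[x1 x2].
    have : x \in W :&: \bigcup_(i in X) A i.
      by rewrite inE x2; apply/bigcupP; exists i.
    by rewrite Z inE.
  have HXpos : 0 < #|X|.
    by rewrite lt0n; apply/negP => /eqP H; move: HX; rewrite H mul0n; lia.
  have [i0 Hi0] : exists i0, i0 \in X by apply/card_gt0P.
  have Hkpos : 0 < ktot kq.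
    by rewrite lt0n; apply/negP => /eqP H; move: HX; rewrite H muln0; lia.
  have HXu : X \subset uncov A W3.
    apply/subsetP => i Hi; rewrite inE.
    exact: disjointWr HW3 (Hdis i Hi).
  case: (boolP [exists j, #|W3 :&: Cj part j| < kq j]).
  + case/existsP => j Hj.
    have := Hcom j; rewrite card_gt0 => /set0Pn [c]; rewrite inE => /andP[Hc1 Hc2].
    have HcA : forall i, i \in X -> c \in A i by move=> i Hi; move/bigcapP: Hc1; apply.
    have HcW : c \notin W3.
      by apply/negP => HcW; move: (disjointFr (Hdis i0 Hi0) (HcA i0 Hi0)); rewrite (subsetP HW3 _ HcW).
    have Hpc : part c = j by move: Hc2; rewrite inE => /eqP.
    have Hel : eligible part kq W3 c by rewrite /eligible HcW Hpc Hj.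
    have := Hst3 c Hel.
    have : #|X| <= supp A (uncov A W3) c.
      apply: subset_leq_card; apply/subsetP => i Hi; rewrite inE (subsetP HXu _ Hi).
      exact: HcA.
    move=> H1 H3; have := leq_mul H1 (leqnn (ktot kq)); lia.
  + move/existsPn => Hfull.
    have Hfull' : forall j, kq j <= #|W3 :&: Cj part j|.
      by move=> j; have := Hfull j; rewrite -leqNgt.
    have HkW : ktot kq <= #|W3| by rewrite (card_parts part W3); apply: leq_sum => j _.
    set B := #|uncov A (Ws l)| * ktot kq + n * #|Ws l|.
    have HQ : #|uncov A W3| * ktot kq + n * #|W3| <= B.
      apply: (starP (I := fun W => #|uncov A W| * ktot kq + n * #|W| <= B) _ Hr3) => //.
      move=> a b Hab Ha; exact: leq_trans (step3_Q Hab) Ha.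
    have HB : B <= n * ktot kq.
      rewrite /B (card_parts part (Ws l)) /ktot !big_distrr /= -big_split /=.
      apply: leq_sum => j _.
      have := HP j l (leqnn l); rewrite /PJ => Hj.
      apply: leq_trans Hj; rewrite leq_add2r leq_mul2r; apply/orP; right.
      apply: subset_leq_card; apply/subsetP => i; rewrite !inE.
      by apply: disjointWr; apply: subsetIl.
    have HXu' : #|X| <= #|uncov A W3| by apply: subset_leq_card.
    have := leq_mul HXu' (leqnn (ktot kq)).
    have := leq_mul (leqnn n) HkW.
    have : 0 < #|X| * ktot kq by rewrite muln_gt0 HXpos.
    lia.
- move=> X j HX Hcom.
  case: (posnP #|W :&: Cj part j :&: \bigcup_(i in X) A i|) => [Z0|]; last by [].
  have Z := cards0_eq Z0.
  have Hdis : forall i, i \in X -> [disjoint A i & W :&: Cj part j].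
    move=> i Hi; rewrite -setI_eq0; apply/eqP/setP => x; rewrite !inE.
    apply/negbTE/negP => /and3P[x1 x2 x3].
    have : x \in W :&: Cj part j :&: \bigcup_(i in X) A i.
      by rewrite !inE x2 x3; apply/bigcupP; exists i.
    by rewrite Z inE.
  have HXpos : 0 < #|X|.
    by rewrite lt0n; apply/negP => /eqP H; move: HX; rewrite H mul0n; lia.
  have [i0 Hi0] : exists i0, i0 \in X by apply/card_gt0P.
  have Hj1 : j.+1 <= l by [].
  set W2 := Ws j.+1.
  have HW2 : W2 \subset W := HsubW _ Hj1.
  have HXu : X \subset uncov_j part A j W2.
    apply/subsetP => i Hi; rewrite inE.
    apply: disjointWr (Hdis i Hi); exact: setSI.
  have HXc : #|X| <= #|uncov_j part A j W2| by apply: subset_leq_card.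
  have [_ Hstop] := H2 j.
  have := HP j j.+1 Hj1; rewrite /PJ -/W2 => HPj.
  case: Hstop => [Hfull | Hlow].
    rewrite -/W2 in Hfull.
    have := leq_mul (leqnn n) Hfull.
    have : 0 < #|uncov_j part A j W2| * kq j by rewrite muln_gt0 (Hk j) andbT; lia.
    lia.
  move: Hcom; rewrite card_gt0 => /set0Pn [c]; rewrite inE => /andP[Hc1 Hc2].
  have HcA : forall i, i \in X -> c \in A i by move=> i Hi; move/bigcapP: Hc1; apply.
  have HcW : c \notin W2.
    apply/negP => HcW; move: (disjointFr (Hdis i0 Hi0) (HcA i0 Hi0)).
    by rewrite inE Hc2 (subsetP HW2 _ HcW).
  have := Hlow c Hc2 HcW; rewrite -/W2.
  have : #|X| <= supp A (uncov_j part A j W2) c.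
    apply: subset_leq_card; apply/subsetP => i Hi; rewrite inE (subsetP HXu _ Hi).
    exact: HcA.
  move=> H1 H3; have := leq_mul H1 (leqnn (kq j)); lia.
Qed.

Theorem mainTheorem6 (C : finType) (l n : nat) (part : C -> 'I_l)
    (kq : 'I_l -> nat) (A : 'I_n -> {set C}) :
  0 < n ->
  (forall j : 'I_l, 0 < kq j) ->
  (forall j : 'I_l, kq j <= #|Cj part j|) ->
  (exists W : {set C}, [/\ is_committee part kq W,
       weak_SW_JR part kq A W & IW_JR part kq A W]) /\
  (exists W : {set C}, procedure_output part kq A W) /\
  (forall W : {set C}, procedure_output part kq A W ->
       [/\ is_committee part kq W, weak_SW_JR part kq A W & IW_JR part kq A W]).
Proof.
move=> Hn Hk HkC.
have Hex : exists W : {set C}, procedure_output part kq A W.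
  have [Ws [H0 H2]] := Ws_ex part kq A (leqnn l).
  have H2' : forall j : 'I_l, run2 part kq A j (Ws j) (Ws j.+1).
    by move=> j; apply: H2.
  have [W3 [Hr3 Hst3]] := run3_ex part kq A (Ws l).
  have HI : Inv part kq W3.
    apply: (starP (fun a b => @step3_Inv _ _ _ part kq A a b) Hr3).
    exact: Inv_Ws H0 H2' l (leqnn l).
  have [W [HW HC]] := fill_ex HI HkC.
  by exists W, Ws, W3; split.
have Hc : forall W : {set C}, procedure_output part kq A W ->
    [/\ is_committee part kq W, weak_SW_JR part kq A W & IW_JR part kq A W].
  by move=> W; apply: correct.
split; last by split.
by have [W HW] := Hex; exists W; apply: Hc.
Qed.
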